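(* Let $\mathbf{X}\in\{0,1\}^{m\times n}$ and let $C\subseteq\mathrm{supp}(\mathbf{X})$ be the vertex set of an odd hole of size $|C|=2k+1$ in $\mathcal{G}(\mathbf{X})$, and suppose $Q:=\mathrm{supp}(\mathbf{X})\setminus C$ is nonempty. Then $i(\mathcal{S}^Q(\mathbf{X}))=k+|Q|$ and $br(\mathcal{S}^Q(\mathbf{X}))=k+1+|Q|$; in particular $\mathcal{S}^Q(\mathbf{X})$ is not firm.
   Context: For a binary matrix $\mathbf{X}$, $\mathrm{supp}(\mathbf{X})=\{(i,j):x_{i,j}=1\}$; a rectangle is a set $I\times J\subseteq\mathrm{supp}(\mathbf{X})$. An isolated set is a subset of $\mathrm{supp}(\mathbf{X})$ no two distinct elements of which lie in a common rectangle; $i(\mathbf{X})$ is its maximum size, and $br(\mathbf{X})$ is the minimum number of rectangles whose union is $\mathrm{supp}(\mathbf{X})$. $\mathbf{X}$ is firm if $i(\mathbf{X}')=br(\mathbf{X}')$ for every submatrix $\mathbf{X}'$ (including $\mathbf{X}$). The rectangle cover graph $\mathcal{G}(\mathbf{X})$ has vertex set $\mathrm{supp}(\mathbf{X})$, two vertices adjacent iff some rectangle contains both. An odd hole is an induced chordless cycle of odd length at least $5$. Stretching: for nonempty $Q=\{(\ell_1,k_1),\dots,(\ell_q,k_q)\}\subseteq\mathrm{supp}(\mathbf{X})$ listed in lexicographic order, $\mathcal{S}^Q(\mathbf{X})$ is the $(m+q)\times(n+q)$ binary matrix whose top-left $m\times n$ block is $\mathbf{X}$, whose entries at $(\ell_t,n+t)$,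 $(m+t,k_t)$, $(m+t,n+t)$ equal $1$ for each $t\in[q]$, and all of whose other entries are $0$. *)

(* Defs.v *)
From mathcomp Require Import all_boot all_algebra.
Set Implicit Arguments. Unset Strict Implicit. Unset Printing Implicit Defensive.

Section BinMat.
Variables (m n : nat).
Local Notation pos := ('I_m * 'I_n)%type.

Definition supp (X : 'M[bool]_(m, n)) : {set pos} := [set p | X p.1 p.2].

Definition rect (X : 'M[bool]_(m, n)) (I : {set 'I_m}) (J : {set 'I_n}) : bool :=
  setX I J \subset supp X.

Definition common_rect (X : 'M[bool]_(m, n)) (p r : pos) : bool :=
  [exists I : {set 'I_m}, exists J : {set 'I_n},
     [&& rect X I J, p \in setX I J & r \in setX I J]].

Definition isolated (X : 'M[bool]_(m, n)) (S : {set pos}) : bool :=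
  (S \subset supp X) &&
  [forall p in S, forall r in S, (p != r) ==> ~~ common_rect X p r].

Definition iso_num (X : 'M[bool]_(m, n)) : nat :=
  \max_(S : {set pos} | isolated X S) #|S|.

Definition rect_cover (X : 'M[bool]_(m, n))
    (F : {set ({set 'I_m} * {set 'I_n})}) : bool :=
  [forall R in F, rect X R.1 R.2] &&
  (\bigcup_(R in F) setX R.1 R.2 == supp X).

(* Boolean rank br(X): minimum size of a rectangle cover.  The default value
   #|supp X| is attained by the cover by singleton rectangles, so it does not
   affect the minimum. *)
Definition brank (X : 'M[bool]_(m, n)) : nat :=
  \big[minn/#|supp X|]_(F : {set ({set 'I_m} * {set 'I_n})} | rect_cover X F) #|F|.

Definition rc_adj (X : 'M[bool]_(m, n)) (p r : pos) : bool :=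
  [&& p \in supp X, r \in supp X, p != r & common_rect X p r].

(* c (a duplicate-free cyclic listing of vertices) is an odd hole of G(X):
   an induced chordless cycle of odd length >= 5, whose edges are exactly the
   pairs of cyclically consecutive entries of c. *)
Definition odd_hole_seq (X : 'M[bool]_(m, n)) (c : seq pos) : bool :=
  if c is x0 :: _ then
  [&& uniq c, odd (size c), 5 <= size c, all (mem (supp X)) c &
   [forall i : 'I_(size c), forall j : 'I_(size c), (i != j) ==>
      (rc_adj X (nth x0 c i) (nth x0 c j) ==
       ((val j == (i.+1 %% size c)) || (val i == (j.+1 %% size c))))]]
  else false.

Definition odd_hole (X : 'M[bool]_(m, n)) (C : {set pos}) : Prop :=
  exists c : seq pos, odd_hole_seq X c /\ C = [set x in c].

Definition lexle (p r : pos) : bool :=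
  (val p.1 < val r.1) || ((p.1 == r.1) && (val p.2 <= val r.2)).

Definition lex_enum (Q : {set pos}) : seq pos := sort lexle (enum Q).

Definition qentry (Q : {set pos}) (t : nat) : option pos :=
  nth None (map Some (lex_enum Q)) t.

Definition stretch (X : 'M[bool]_(m, n)) (Q : {set pos}) :
    'M[bool]_(m + #|Q|, n + #|Q|) :=
  \matrix_(i, j)
    match split i, split j with
    | inl i', inl j' => X i' j'
    | inl i', inr t => if qentry Q t is Some p then p.1 == i' else false
    | inr t, inl j' => if qentry Q t is Some p then p.2 == j' else false
    | inr t, inr t' => t == t'
    end.
End BinMat.

(* submatrix given by strictly increasing row / column selections *)
Definition firm m n (X : 'M[bool]_(m, n)) : Prop :=
  forall m' n' (f : 'I_m' -> 'I_m) (g : 'I_n' -> 'I_n),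
    {homo f : x y / x < y} -> {homo g : x y / x < y} ->
    iso_num (mxsub f g X) = brank (mxsub f g X).

(* Main.v *)
Require Import Defs.
From mathcomp Require Import all_boot all_algebra.
From mathcomp Require Import zify.

Set Implicit Arguments. Unset Strict Implicit.

Lemma card_cover_le (T I : finType) (P : pred I) (f : I -> {set T}) (A : {set T}) :
  A \subset \bigcup_(i | P i) f i -> #|A| <= \sum_(i | P i) #|A :&: f i|.
Proof.
move=> /subsetP sub.
have H : #|\bigcup_(i | P i) (A :&: f i)| <= \sum_(i | P i) #|A :&: f i|.
  apply: (@big_ind2 {set T} nat (fun U s => #|U| <= s)) => //.
  - by rewrite cards0.
  - move=> U1 s1 U2 s2 h1 h2; rewrite cardsU.
    apply: leq_trans (leq_subr _ _) _; exact: leq_add.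
apply: leq_trans H; apply: subset_leq_card; apply/subsetP=> x xA.
by move/bigcupP: (sub x xA) => [i Pi xf]; apply/bigcupP; exists i => //; apply/setIP.
Qed.

Lemma cr_cross m n (Z : 'M[bool]_(m, n)) p r : common_rect Z p r -> Z p.1 r.2.
Proof.
case/existsP=> I /existsP[J /and3P[/subsetP R pI rI]].
have : (p.1, r.2) \in setX I J.
  by move: pI rI; case: p => ? ?; case: r => ? ?; rewrite !in_setX => /andP[-> _] /andP[_ ->].
by move/R; rewrite inE.
Qed.

Lemma cr_of_rect m n (Z : 'M[bool]_(m, n)) I J p r :
  rect Z I J -> p \in setX I J -> r \in setX I J -> common_rect Z p r.
Proof. by move=> *; apply/existsP; exists I; apply/existsP; exists J; apply/and3P. Qed.

Unset Implicit Arguments.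
Set Strict Implicit.

Lemma modS s i : i < s -> i.+1 %% s = (if i.+1 < s then i.+1 else 0).
Proof. move=> lt; case: ltnP => h; first by rewrite modn_small.
have -> : i.+1 = s by lia.
by rewrite modnn. Qed.
Lemma tri3 s a b d : 5 <= s -> a < s -> b < s -> d < s -> a != b -> b != d -> a != d ->
  (b == a.+1 %% s) || (a == b.+1 %% s) ->
  (d == b.+1 %% s) || (b == d.+1 %% s) ->
  (d == a.+1 %% s) || (a == d.+1 %% s) -> False.
Proof.
move=> h5 ha hb hd; rewrite !modS //.
do 3 case: ifP; lia.
Qed.
Lemma par2 s a b : a.*2.+1 < s -> b.*2.+1 < s -> a != b -> ~~ ((b.*2 == (if a.*2.+1 < s then a.*2.+1 else 0)) || (a.*2 == (if b.*2.+1 < s then b.*2.+1 else 0))).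
Proof. rewrite -!muln2; do 2 case: ifP; lia. Qed.
Lemma bigmin_le (I : finType) (P : pred I) (F : I -> nat) x i0 :
  P i0 -> \big[minn/x]_(i | P i) F i <= F i0.
Proof.
move=> Pi0; have : i0 \in index_enum I by rewrite mem_index_enum.
elim: (index_enum I) => [//|j r IH]; rewrite inE big_cons => /orP[/eqP<-|/IH h].
- by rewrite Pi0 geq_minl.
- by case: (P j) => //; rewrite geq_min h orbT.
Qed.

Section Main.
Variables (m n : nat) (X : 'M[bool]_(m, n)) (C : {set 'I_m * 'I_n}) (k : nat).
Variables (x0 : 'I_m * 'I_n) (c' : seq ('I_m * 'I_n)).
Local Notation c := (x0 :: c').
Hypothesis hc : odd_hole_seq X c.
Hypothesis hC : C = [set x in c].
Hypothesis hk : #|C| = k.*2.+1.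
Local Notation Q := (supp X :\: C).
Local Notation N := #|Q|.
Local Notation Y := (stretch X Q).
Local Notation s := (size c).

Definition ee (t : nat) := nth x0 (lex_enum Q) t.

Lemma lexE : perm_eq (lex_enum Q) (enum Q).
Proof. by rewrite /lex_enum perm_sort. Qed.
Lemma size_lex : size (lex_enum Q) = N.
Proof. by rewrite (perm_size lexE) cardE. Qed.
Lemma uniq_lex : uniq (lex_enum Q).
Proof. by rewrite (perm_uniq lexE) enum_uniq. Qed.
Lemma mem_lex p : (p \in lex_enum Q) = (p \in Q).
Proof. by rewrite (perm_mem lexE) mem_enum. Qed.

Lemma qentryE (t : 'I_N) : qentry Q t = Some (ee t).
Proof. by rewrite /qentry (nth_map x0) // size_lex. Qed.

Lemma ee_Q (t : 'I_N) : ee t \in Q.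
Proof. by rewrite -mem_lex mem_nth // size_lex. Qed.

Lemma ee_inj (t t' : 'I_N) : ee t = ee t' -> t = t'.
Proof.
move=> h; apply: val_inj => /=; move: h; rewrite /ee.
by move/eqP; rewrite nth_uniq ?size_lex ?uniq_lex // => /eqP.
Qed.

Lemma ee_surj p : p \in Q -> exists t : 'I_N, p = ee t.
Proof.
move=> pQ; have hi : index p (lex_enum Q) < N by rewrite -size_lex index_mem mem_lex.
by exists (Ordinal hi); rewrite /ee nth_index // mem_lex.
Qed.

Lemma Yll i j : Y (lshift N i) (lshift N j) = X i j.
Proof. by rewrite mxE -/(unsplit (inl i)) -/(unsplit (inl j)) !unsplitK. Qed.
Lemma Ylr i (t : 'I_N) : Y (lshift N i) (rshift n t) = ((ee t).1 == i).
Proof. by rewrite mxE -/(unsplit (inl i)) -/(unsplit (inr t)) !unsplitK qentryE. Qed.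
Lemma Yrl (t : 'I_N) j : Y (rshift m t) (lshift N j) = ((ee t).2 == j).
Proof. by rewrite mxE -/(unsplit (inr t)) -/(unsplit (inl j)) !unsplitK qentryE. Qed.
Lemma Yrr (t t' : 'I_N) : Y (rshift m t) (rshift n t') = (t == t').
Proof. by rewrite mxE -/(unsplit (inr t)) -/(unsplit (inr t')) !unsplitK. Qed.


Lemma hparts : [/\ uniq c, 5 <= s, {in c, forall x, x \in supp X} &
  forall i j : 'I_s, i != j -> rc_adj X (nth x0 c i) (nth x0 c j) =
     ((val j == (i.+1 %% s)) || (val i == (j.+1 %% s)))].
Proof.
move: hc; rewrite /odd_hole_seq => /and5P[hu _ h5 /allP ha /forallP hadj]; split=> //.
by move=> i j ij; have /forallP/(_ j)/implyP/(_ ij)/eqP := hadj i.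
Qed.

Lemma sE : s = k.*2.+1.
Proof. by rewrite -hk hC cardsE; apply/esym/card_uniqP; case: hparts. Qed.

Lemma cr_idx (i j : nat) : i < s -> j < s -> i != j ->
  common_rect X (nth x0 c i) (nth x0 c j) = (j == i.+1 %% s) || (i == j.+1 %% s).
Proof.
move=> hi hj ij; case: hparts => hu _ hs hadj.
have := hadj (Ordinal hi) (Ordinal hj) ij; rewrite /= /rc_adj => <-.
by rewrite !hs ?mem_nth // nth_uniq // ij.
Qed.

Lemma C_nth x : x \in C -> exists2 p, p < s & x = nth x0 c p.
Proof. by rewrite hC inE => xc; exists (index x c); rewrite ?index_mem ?nth_index. Qed.

Lemma nth_C p : p < s -> nth x0 c p \in C.
Proof. by move=> hp; rewrite hC inE mem_nth. Qed.

Lemma indep_bound (S : {set 'I_m * 'I_n}) : S \subset C ->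
  {in S &, forall a b, a != b -> ~~ common_rect X a b} -> #|S| <= k.
Proof.
move=> /subsetP SC hS; case: hparts => hu h5 _ _.
pose succ x := nth x0 c ((index x c).+1 %% s).
have s0 : 0 < s by lia.
have hidx x : x \in S -> index x c < s by move/SC; rewrite hC inE index_mem.
have succC x : x \in S -> succ x \in C by move=> _; rewrite nth_C // ltn_pmod.
have xc x : x \in S -> x \in c by move/SC; rewrite hC inE.
have succinj : {in S &, injective succ}.
  move=> x y xS yS; rewrite /succ => /eqP; rewrite nth_uniq ?ltn_pmod // => /eqP.
  rewrite !modS ?hidx // => e.
  have gen : forall a b, a < s -> b < s -> (if a.+1 < s then a.+1 else 0) = (if b.+1 < s then b.+1 else 0) -> a = b.
    by move=> a b ha hb; do 2 case: ifP; lia.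
  have e2 := gen _ _ (hidx x xS) (hidx y yS) e.
  by rewrite -(nth_index x0 (xc _ xS)) e2 nth_index // xc.
have gen2 : forall a, a < s -> (if a.+1 < s then a.+1 else 0) != a.
  by move=> a ha; case: ifP; lia.
have succN x : x \in S -> index x c != (index x c).+1 %% s.
  by move=> xS; rewrite eq_sym modS ?hidx // gen2 ?hidx.
have succcr x : x \in S -> common_rect X x (succ x).
  move=> xS; rewrite -{1}(nth_index x0 (xc x xS)) cr_idx ?ltn_pmod ?hidx ?succN //.
  by rewrite eqxx.
have I0 : S :&: succ @: S = set0.
  apply/setP => y; rewrite !inE; apply/negP => /andP[yS /imsetP[x xS ey]].
  have xy : x != y.
    rewrite ey /succ; apply/negP => /eqP e.
    have h2 : index (nth x0 c ((index x c).+1 %% s)) c = (index x c).+1 %% s.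
      by apply: index_uniq; rewrite ?ltn_pmod.
    have h3 := etrans (congr1 (index^~ c) e) h2.
    by move: (succN x xS); rewrite {1}h3 eqxx.
  by have := hS x y xS yS xy; rewrite ey succcr.
have := cardsUI S (succ @: S); rewrite I0 cards0 addn0 card_in_imset //.
have : #|S :|: succ @: S| <= #|C|.
  apply: subset_leq_card; rewrite subUset; apply/andP; split; apply/subsetP => //.
  by move=> y /imsetP[x xS ->]; apply: succC.
rewrite hk => h1 h2; rewrite h2 -addnn in h1.
set a := #|S| in h1 *; lia.
Qed.


Lemma tri_C a b d : a \in C -> b \in C -> d \in C -> a != b -> b != d -> a != d ->
  common_rect X a b -> common_rect X b d -> common_rect X a d -> False.
Proof.
case: hparts => _ h5 _ _.
move=> /C_nth[pa ha ->] /C_nth[pb hb ->] /C_nth[pd hd ->] nab nbd nad.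
have ne p q : nth x0 c p != nth x0 c q -> p != q by apply: contraNneq => ->.
rewrite !cr_idx ?ne //.
exact: (tri3 _ _ _ _ h5 ha hb hd (ne _ _ nab) (ne _ _ nbd) (ne _ _ nad)).
Qed.

Definition lift (p : 'I_m * 'I_n) : 'I_(m + N) * 'I_(n + N) := (lshift N p.1, lshift N p.2).

Lemma lift_inj : injective lift.
Proof. by move=> [a b] [a1 b1] [/val_inj -> /val_inj ->]. Qed.

Lemma cr_lift a b : common_rect Y (lift a) (lift b) = common_rect X a b.
Proof.
apply/idP/idP.
- case/existsP=> I /existsP[J /and3P[/subsetP R aI bI]].
  apply: (@cr_of_rect _ _ _ [set i | lshift N i \in I] [set j | lshift N j \in J]).
  + apply/subsetP=> -[i j]; rewrite in_setX !inE => ij.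
    by have := R (lshift N i, lshift N j); rewrite in_setX ij inE Yll => ->.
  + by move: aI; case: a => ? ?; rewrite !in_setX !inE.
  + by move: bI; case: b => ? ?; rewrite !in_setX !inE.
- case/existsP=> I /existsP[J /and3P[/subsetP R aI bI]].
  apply: (@cr_of_rect _ _ _ (lshift N @: I) (lshift N @: J)).
  + apply/subsetP=> -[i j]; rewrite in_setX => /andP[/imsetP[i' iI ->] /imsetP[j' jJ ->]].
    by rewrite inE /= Yll; have := R (i', j'); rewrite in_setX iI jJ inE => ->.
  + by move: aI; case: a => ? ?; rewrite !in_setX => /andP[? ?]; rewrite !imset_f.
  + by move: bI; case: b => ? ?; rewrite !in_setX => /andP[? ?]; rewrite !imset_f.
Qed.

Lemma cr_sym m' n' (Z : 'M[bool]_(m', n')) p r : common_rect Z p r = common_rect Z r p.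
Proof.
by apply/idP/idP => /existsP[I /existsP[J /and3P[R h1 h2]]]; exact: (cr_of_rect R h2 h1).
Qed.

Lemma rect_pair m' n' (Z : 'M[bool]_(m', n')) p r :
  common_rect Z p r -> rect Z [set p.1; r.1] [set p.2; r.2].
Proof.
case/existsP=> I /existsP[J /and3P[/subsetP R]].
case: p => p1 p2; case: r => r1 r2; rewrite !in_setX => /andP[h1 h2] /andP[h3 h4].
apply/subsetP => -[i j]; rewrite in_setX !in_set2 => /andP[hi hj]; apply: R.
by rewrite in_setX; apply/andP; split; [case/orP: hi | case/orP: hj] => /eqP ->.
Qed.

Definition diag (t : 'I_N) : 'I_(m + N) * 'I_(n + N) := (rshift m t, rshift n t).
Definition RI (t : 'I_N) : {set 'I_(m + N)} := [set lshift N (ee t).1; rshift m t].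
Definition RJ (t : 'I_N) : {set 'I_(n + N)} := [set lshift N (ee t).2; rshift n t].

Lemma rectB t : rect Y (RI t) (RJ t).
Proof.
have eX : X (ee t).1 (ee t).2 by have := ee_Q t; rewrite !inE => /andP[_].
apply/subsetP => -[i j]; rewrite in_setX !in_set2 inE /=.
by case/andP => /orP[]/eqP-> /orP[]/eqP->; rewrite ?Yll ?Ylr ?Yrl ?Yrr ?eqxx.
Qed.

Lemma diag_in_B t : diag t \in setX (RI t) (RJ t).
Proof. by rewrite in_setX !in_set2 !eqxx !orbT. Qed.

Lemma lr_neq (i : 'I_m) (t : 'I_N) : lshift N i != rshift m t.
Proof. by apply/negP => /eqP/(congr1 val) /= e; have := ltn_ord i; rewrite e; lia. Qed.
Lemma lr_neq' (i : 'I_n) (t : 'I_N) : lshift N i != rshift n t.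
Proof. by apply/negP => /eqP/(congr1 val) /= e; have := ltn_ord i; rewrite e; lia. Qed.

Lemma diag_ncr (t t' : 'I_N) : t != t' -> ~~ common_rect Y (diag t) (diag t').
Proof. by move=> ne; apply/negP => /cr_cross /=; rewrite Yrr (negbTE ne). Qed.

Lemma diag_lift_ncr t x : x \in C -> ~~ common_rect Y (diag t) (lift x).
Proof.
move=> xC; apply/negP => h.
have := cr_cross h; rewrite cr_sym in h; have := cr_cross h.
rewrite /= Ylr Yrl => /eqP e1 /eqP e2.
have : x = ee t by move: e1 e2 {h}; case: x xC => a b _; case: (ee t) => a1 b1 /= -> ->.
by move=> ex; have := ee_Q t; rewrite -ex inE xC.
Qed.

Lemma suppY_cases p : p \in supp Y ->
  (exists2 x, x \in C & p = lift x) \/ (exists t, p \in setX (RI t) (RJ t)).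
Proof.
case: p => i j; rewrite inE /=.
rewrite -(splitK i) -(splitK j).
case: (split i) => [i'|t]; case: (split j) => [j'|t'] /=.
- rewrite Yll => hX.
  case: (boolP ((i', j') \in C)) => hC'; first by left; exists (i', j').
  have : (i', j') \in Q by rewrite !inE hC' hX.
  case/ee_surj => t et; right; exists t.
  by rewrite in_setX !in_set2 -et /= !eqxx.
- rewrite Ylr => /eqP <-; right; exists t'.
  by rewrite in_setX !in_set2 !eqxx !orbT.
- rewrite Yrl => /eqP <-; right; exists t.
  by rewrite in_setX !in_set2 !eqxx !orbT.
- rewrite Yrr => /eqP <-; right; exists t.
  by rewrite in_setX !in_set2 !eqxx !orbT.
Qed.

Lemma iso_upper S : isolated Y S -> #|S| <= k + N.
Proof.
case/andP => /subsetP Ssupp /forall_inP hiso.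
have iso p r : p \in S -> r \in S -> p != r -> ~~ common_rect Y p r.
  by move=> pS rS; have /forall_inP/(_ r rS)/implyP := hiso p pS.
pose L := lift @: C.
have e := cardsID L S.
have h1 : #|S :&: L| <= k.
  pose S' := [set x in C | lift x \in S].
  have : #|S'| <= k.
    apply: indep_bound; first by apply/subsetP => x; rewrite inE => /andP[].
    move=> a b; rewrite !inE => /andP[aC aS] /andP[bC bS] ab.
    rewrite -cr_lift; apply: (iso _ _ aS bS).
    by apply: contra ab => /eqP/lift_inj ->.
  move=> hS'; apply: leq_trans hS'; rewrite -(card_imset S' lift_inj).
  apply: subset_leq_card; apply/subsetP => p; rewrite !inE => /andP[pS /imsetP[x xC ep]].
  by rewrite ep imset_f // inE xC -ep.
have h2 : #|S :\: L| <= N.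
  have cov : S :\: L \subset \bigcup_(t | true) setX (RI t) (RJ t).
    apply/subsetP => p; rewrite inE => /andP[pL pS].
    case: (suppY_cases _ (Ssupp p pS)) => [[x xC ex]|[t ht]].
      by move: pL; rewrite ex imset_f.
    by apply/bigcupP; exists t.
  apply: leq_trans (card_cover_le cov) _.
  apply: (@leq_trans (\sum_(t < N) 1)); last by rewrite sum1_card card_ord.
  apply: leq_sum => t _.
  apply/card_le1_eqP => p r /setIP[/setDP[pS _] pB] /setIP[/setDP[rS _] rB].
  apply/eqP; apply/negPn/negP => ne; have := iso r p rS pS ne.
  by rewrite (cr_of_rect (rectB t) rB pB).
by rewrite -e; apply: leq_add.
Qed.

Lemma iso_lower : exists2 S, isolated Y S & #|S| = k + N.
Proof.
case: hparts => hu h5 hsupp _.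
have hs := sE.
have lt2 (i : 'I_k) : (i : nat).*2 < s by rewrite hs; have := ltn_ord i; lia.
pose Sa := [set lift (nth x0 c (i : nat).*2) | i : 'I_k].
pose Sd := [set diag t | t : 'I_N].
have cSa : #|Sa| = k.
  rewrite card_imset ?card_ord // => i j /lift_inj /eqP.
  rewrite nth_uniq // => /eqP e; apply: val_inj; exact: double_inj e.
have cSd : #|Sd| = N.
  rewrite card_imset ?card_ord // => t t' [/addnI e].
  by move/addnI; apply: val_inj.
have I0 : Sa :&: Sd = set0.
  apply/setP => p; rewrite !inE; apply/negP => /andP[/imsetP[i _ ->] /imsetP[t _ /pair_equal_spec[e _]]].
  by move: (lr_neq (nth x0 c i.*2).1 t); rewrite e eqxx.
exists (Sa :|: Sd); last by have := cardsUI Sa Sd; rewrite I0 cards0 addn0 cSa cSd.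
apply/andP; split.
  apply/subsetP => p; rewrite inE => /orP[/imsetP[i _ ->]|/imsetP[t _ ->]]; rewrite inE /=.
    by rewrite Yll; have := hsupp _ (mem_nth x0 (lt2 i)); rewrite inE.
  by rewrite Yrr.
apply/forall_inP => p pS; apply/forall_inP => r rS; apply/implyP => pr.
move: pS rS pr; rewrite !inE => /orP[/imsetP[i _ ->]|/imsetP[t _ ->]] /orP[/imsetP[j _ ->]|/imsetP[t' _ ->]] pr.
- rewrite cr_lift cr_idx ?lt2 //; last by apply: contra pr => /eqP ->.
  have ij : (i : nat) != j by apply: contra pr => /eqP/val_inj ->.
  rewrite !modS ?lt2 //; apply: par2 => //; rewrite hs; have := ltn_ord i; have := ltn_ord j; lia.
- by rewrite cr_sym diag_lift_ncr // nth_C.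
- by rewrite diag_lift_ncr // nth_C.
- by apply: diag_ncr; apply: contra pr => /eqP ->.
Qed.

Definition Lset := [set lift x | x in C].
Definition Dset := [set diag t | t : 'I_N].

Lemma card_L : #|Lset| = k.*2.+1.
Proof. by rewrite card_imset ?hk //; exact: lift_inj. Qed.

Lemma card_D : #|Dset| = N.
Proof.
rewrite card_imset ?card_ord // => t t' [e _]; move: e.
by move/addnI; apply: val_inj.
Qed.

Lemma C_supp x : x \in C -> x \in supp X.
Proof. by case: hparts => _ _ hs _; rewrite hC inE => /hs. Qed.

Lemma lift_supp x : x \in C -> lift x \in supp Y.
Proof. by move/C_supp; rewrite !inE /= Yll. Qed.

Lemma diag_supp t : diag t \in supp Y.
Proof. by rewrite inE /= Yrr. Qed.

Lemma LD0 : Lset :&: Dset = set0.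
Proof.
apply/setP => p; rewrite !inE; apply/negP => /andP[/imsetP[x _ ->] /imsetP[t _ /pair_equal_spec[e _]]].
by move: (lr_neq x.1 t); rewrite e eqxx.
Qed.

Lemma cover_lower F : rect_cover Y F -> k + 1 + N <= #|F|.
Proof.
case/andP => /forall_inP hrect /eqP hun.
have inF p : p \in supp Y -> exists2 R, R \in F & p \in setX R.1 R.2.
  by rewrite -hun => /bigcupP[R RF hR]; exists R.
pose F1 := [set R in F | [exists t, diag t \in setX R.1 R.2]].
pose F2 := [set R in F | [exists x in C, lift x \in setX R.1 R.2]].
have I0 : F1 :&: F2 = set0.
  apply/setP => R; rewrite !inE; apply/negP => /andP[/andP[RF /existsP[t ht]] /andP[_ /exists_inP[x xC hx]]].
  by have := diag_lift_ncr t x xC; rewrite (cr_of_rect (hrect R RF) ht hx).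
have hF : #|F1| + #|F2| <= #|F|.
  rewrite -cardsUI I0 cards0 addn0; apply: subset_leq_card; rewrite subUset.
  by apply/andP; split; apply/subsetP => R; rewrite inE => /andP[].
have h1 : N <= #|F1|.
  have cov : Dset \subset \bigcup_(R | R \in F1) setX R.1 R.2.
    apply/subsetP => p /imsetP[t _ ->].
    have [R RF hR] := inF (diag t) (diag_supp t).
    apply/bigcupP; exists R => //; rewrite inE RF; apply/existsP; by exists t.
  apply: (@leq_trans #|Dset|); first by rewrite card_D.
  apply: leq_trans (card_cover_le cov) _.
  apply: (@leq_trans (\sum_(R in F1) 1)); last by rewrite sum1_card.
  apply: leq_sum => R; rewrite inE => /andP[RF _].
  apply/card_le1_eqP => p r /setIP[/imsetP[t _ ->] pR] /setIP[/imsetP[t' _ ->] rR].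
  case: (eqVneq t t') => [->//|ne].
  by have := diag_ncr _ _ ne; rewrite (cr_of_rect (hrect R RF) pR rR).
have h2 : k.*2.+1 <= #|F2| * 2.
  have cov : Lset \subset \bigcup_(R | R \in F2) setX R.1 R.2.
    apply/subsetP => p /imsetP[x xC ->].
    have [R RF hR] := inF (lift x) (lift_supp x xC).
    apply/bigcupP; exists R => //; rewrite inE RF; apply/exists_inP; by exists x.
  rewrite -card_L; apply: leq_trans (card_cover_le cov) _.
  apply: (@leq_trans (\sum_(R in F2) 2)); last by rewrite sum_nat_const.
  apply: leq_sum => R; rewrite inE => /andP[RF _].
  rewrite leqNgt; apply/negP => /card_gt2P [p [r [q [[hp hr hq] [npr nrq nqp]]]]].
  move: hp hr hq npr nrq nqp => /setIP[/imsetP[a aC ->] pR] /setIP[/imsetP[b bC ->] rR] /setIP[/imsetP[d dC ->] qR].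
  move=> nab nbd nda.
  have ne a1 b1 : lift a1 != lift b1 -> a1 != b1 by apply: contra => /eqP ->.
  apply: (tri_C _ _ _ aC bC dC (ne _ _ nab) (ne _ _ nbd)); first by rewrite eq_sym ne.
  - by rewrite -cr_lift (cr_of_rect (hrect R RF) pR rR).
  - by rewrite -cr_lift (cr_of_rect (hrect R RF) rR qR).
  - by rewrite -cr_lift (cr_of_rect (hrect R RF) pR qR).
move: hF h1 h2; set f1 := #|F1|; set f2 := #|F2|; set f := #|F|; rewrite -!muln2; lia.
Qed.

Lemma brank_lower : k + 1 + N <= brank Y.
Proof.
rewrite /brank; apply: (big_ind (fun v => k + 1 + N <= v)).
- have : #|Lset :|: Dset| <= #|supp Y|.
    apply: subset_leq_card; rewrite subUset; apply/andP; split; apply/subsetP.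
      by move=> p /imsetP[x xC ->]; apply: lift_supp.
    by move=> p /imsetP[t _ ->]; apply: diag_supp.
  have := cardsUI Lset Dset; rewrite LD0 cards0 addn0 card_L card_D.
  set u := #|Lset :|: Dset|; set v := #|supp Y|; rewrite -!muln2; lia.
- by move=> a b ha hb; rewrite leq_min ha hb.
- exact: cover_lower.
Qed.

Definition Dp (i : 'I_k.+1) : {set 'I_(m + N)} * {set 'I_(n + N)} :=
  let a := lift (nth x0 c (i : nat).*2) in let b := lift (nth x0 c ((i : nat).*2.+1 %% s)) in
  ([set a.1; b.1], [set a.2; b.2]).

Definition F0 := [set (RI t, RJ t) | t : 'I_N] :|: [set Dp i | i : 'I_k.+1].

Lemma F0_card : #|F0| <= k + 1 + N.
Proof.
apply: leq_trans (leq_card_setU _ _) _.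
have h1 : #|[set (RI t, RJ t) | t : 'I_N]| <= N.
  by apply: leq_trans (leq_imset_card _ _) _; rewrite card_ord.
have h2 : #|[set Dp i | i : 'I_k.+1]| <= k.+1.
  by apply: leq_trans (leq_imset_card _ _) _; rewrite card_ord.
move: h1 h2; set u := #|[set (RI t, RJ t) | t : 'I_N]|; set v := #|[set Dp i | i : 'I_k.+1]|; lia.
Qed.

Lemma F0_cover : rect_cover Y F0.
Proof.
case: hparts => hu h5 _ _; have hs := sE.
have lti (i : 'I_k.+1) : (i : nat).*2 < s by rewrite hs; have := ltn_ord i; lia.
have rectD i : rect Y (Dp i).1 (Dp i).2.
  apply: rect_pair; rewrite cr_lift cr_idx ?lti ?ltn_pmod ?eqxx //.
  rewrite modS ?lti //; move: (lti i); rewrite hs -!muln2; case: ifP; lia.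
have rectF R : R \in F0 -> rect Y R.1 R.2.
  by rewrite inE => /orP[/imsetP[t _ ->]|/imsetP[i _ ->]]; [exact: rectB | exact: rectD].
apply/andP; split; first by apply/forall_inP.
rewrite eqEsubset; apply/andP; split.
  by apply/bigcupsP => R /rectF.
apply/subsetP => p /suppY_cases [[x xC ->]|[t ht]]; apply/bigcupP.
- case/C_nth: xC => q hq ->.
  have hi : q./2 < k.+1 by move: hq; rewrite hs; rewrite -(odd_double_half q) -!muln2; case: (odd q) => /=; lia.
  exists (Dp (Ordinal hi)); first by rewrite inE; apply/orP; right; apply: imset_f.
  rewrite /Dp /=; have := odd_double_half q; case: (odd q) => /= eq.
  + have e1 : (q./2).*2.+1 = q by rewrite -add1n.
    have e2 : (q./2).*2.+1 %% s = q by rewrite e1 modn_small.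
    by rewrite e2 /lift in_setX !in_set2 !eqxx !orbT.
  + by rewrite add0n in eq; rewrite eq /lift in_setX !in_set2 !eqxx.
- by exists (RI t, RJ t) => //; rewrite inE imset_f.
Qed.

Lemma brank_upper : brank Y <= k + 1 + N.
Proof.
apply: leq_trans F0_card; rewrite /brank; apply: bigmin_le; exact: F0_cover.
Qed.

Lemma final : iso_num Y = k + N /\ brank Y = k + 1 + N.
Proof.
split; apply/eqP; rewrite eqn_leq.
- apply/andP; split; first by apply/bigmax_leqP => S; apply: iso_upper.
  by case: iso_lower => S hS <-; apply: leq_bigmax_cond.
- by rewrite brank_upper brank_lower.
Qed.

End Main.


Theorem mainTheorem9 (m n : nat) (X : 'M[bool]_(m, n))
    (C : {set 'I_m * 'I_n}) (k : nat) :
  odd_hole X C -> #|C| = k.*2.+1 ->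
  supp X :\: C != set0 ->
  let Q := supp X :\: C in
  [/\ iso_num (stretch X Q) = k + #|Q|,
      brank (stretch X Q) = k + 1 + #|Q| &
      ~ firm (stretch X Q)].
Proof.
move=> [[|x0 c'] [hc hC]] hk _ Q; first by [].
have [h1 h2] := final _ _ _ _ _ _ _ hc hC hk.
split => //.
move=> hf; have := hf _ _ id id (fun _ _ h => h) (fun _ _ h => h).
have e : mxsub id id (stretch X Q) = stretch X Q := mxsub_eq_id (frefl _) (frefl _) _.
rewrite e h1 h2; lia.
Qed.
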